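(* Let $X$ be a set, $m\colon X\times X\to X$ a binary operation and $i\colon X\to X$ an involution ($i\circ i=1_X$) such that $i(m(x,y))=m(i(y),i(x))$ for all $x,y\in X$. Define $\theta,\varphi\colon X\times X\to X\times X$ by $\theta(x,y)=(i(x),m(x,y))$ and $\varphi(x,y)=(m(x,y),i(y))$. Then $(\theta,\varphi,m)$ is an involutive-2-link (in the category of sets) if and only if for all $x,y\in X$: $$m(i(x),m(x,y))=y\quad\text{and}\quad m(m(x,y),i(y))=x.$$
   Context: Involutive-2-link in a category: a triple $(\theta,\varphi,m)$ where $m\colon A\to B$ is a morphism and $\theta,\varphi\colon A\to A$ satisfy $\theta^2=\varphi^2=1_A$ and $\theta\varphi\theta=\varphi\theta\varphi$, and such that the three parallel morphisms $m,m\theta,m\varphi\colon A\to B$ are jointly monomorphic (in sets: the map $a\mapsto (m(a),m\theta(a),m\varphi(a))$ is injective). *)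

(* Defs.v *)
(* An involutive-2-link (theta, phi, m) in the category of sets:
   m : A -> B, theta, phi : A -> A with theta^2 = phi^2 = 1_A,
   theta phi theta = phi theta phi, and m, m theta, m phi jointly monomorphic
   (i.e. a |-> (m a, m (theta a), m (phi a)) is injective). *)
Definition involutive_2_link {A B : Type}
  (theta phi : A -> A) (m : A -> B) : Prop :=
  (forall a, theta (theta a) = a) /\
  (forall a, phi (phi a) = a) /\
  (forall a, theta (phi (theta a)) = phi (theta (phi a))) /\
  (forall a a', m a = m a' -> m (theta a) = m (theta a') ->
                m (phi a) = m (phi a') -> a = a').

(* Main.v *)
Require Import Defs.

Theorem mainTheorem2 (X : Type) (m : X -> X -> X) (i : X -> X)
  (hi : forall x, i (i x) = x)
  (him : forall x y, i (m x y) = m (i y) (i x)) :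
  involutive_2_link
    (fun p : X * X => (i (fst p), m (fst p) (snd p)))
    (fun p : X * X => (m (fst p) (snd p), i (snd p)))
    (fun p : X * X => m (fst p) (snd p))
  <->
  (forall x y, m (i x) (m x y) = y /\ m (m x y) (i y) = x).
Proof.
  split.
  - intros [H1 [H2 _]] x y. split.
    + specialize (H1 (x, y)). simpl in H1. injection H1; intros; assumption.
    + specialize (H2 (x, y)). simpl in H2. injection H2; intros; assumption.
  - intros H. split; [|split; [|split]].
    + intros [x y]. simpl. rewrite hi. rewrite (proj1 (H x y)). reflexivity.
    + intros [x y]. simpl. rewrite hi. rewrite (proj2 (H x y)). reflexivity.
    + intros [x y]. simpl. rewrite (proj1 (H x y)).
      rewrite (proj2 (H x y)). rewrite him.
      assert (E1 : m y (m (i y) (i x)) = i x).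
      { pose proof (proj1 (H (i y) (i x))) as E. rewrite hi in E. exact E. }
      assert (E2 : m (m (i y) (i x)) x = i y).
      { pose proof (proj2 (H (i y) (i x))) as E. rewrite hi in E. exact E. }
      rewrite E1, E2. reflexivity.
    + intros [x y] [x' y']. simpl. intros _ Ht Hp.
      rewrite (proj1 (H x y)), (proj1 (H x' y')) in Ht.
      rewrite (proj2 (H x y)), (proj2 (H x' y')) in Hp.
      subst. reflexivity.
Qed.
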